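(* Let $\mathcal{A}$ be an algebra in a functional language $\mathcal{L}$ and let $\mathcal{B}$ be an $\mathcal{A}$-equationally Noetherian $\mathcal{A}$-algebra. Then for a finitely generated $\mathcal{A}$-algebra $\mathcal{C}$ the following conditions are equivalent: (1) $\mathrm{Th}_{\forall,\mathcal{A}}(\mathcal{B}) \subseteq \mathrm{Th}_{\forall,\mathcal{A}}(\mathcal{C})$; (2) $\mathrm{Th}_{\exists,\mathcal{A}}(\mathcal{B}) \supseteq \mathrm{Th}_{\exists,\mathcal{A}}(\mathcal{C})$; (3) $\mathcal{C}$ $\mathcal{A}$-embeds into an ultrapower of $\mathcal{B}$; (4) $\mathcal{C}$ is $\mathcal{A}$-discriminated by $\mathcal{B}$; (5) $\mathcal{C}$ is ($\mathcal{A}$-isomorphic to) a limit algebra over $\mathcal{B}$ with respect to a direct system of formulas in $\mathcal{L}_{\mathcal{A}}$; (6) $\mathcal{C}$ is ($\mathcal{A}$-isomorphic to) an algebra defined by a complete atomic type in the theory $\mathrm{Th}_{\forall,\mathcal{A}}(\mathcal{B})$ in the language $\mathcal{L}_{\mathcal{A}}$; (7) $\mathcal{C}$ is ($\mathcal{A}$-isomorphic to) the coordinate algebra of an irreducible algebraic set over $\mathcal{B}$ defined by a system of equations with coefficients in $\mathcal{A}$.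
   Context: A functional language $\mathcal{L}$ has only operation symbols $F$ (arity $n_F$) and constant symbols; its structures are $\mathcal{L}$-algebras. $\mathcal{L}_{\mathcal{A}}=\mathcal{L}\cup\{c_a: a\in A\}$ with new constants. An $\mathcal{A}$-algebra is an $\mathcal{L}_{\mathcal{A}}$-algebra $\mathcal{B}$ such that $a\mapsto c_a^{\mathcal{B}}$ is an embedding of $\mathcal{L}$-algebras $\mathcal{A}\to\mathcal{B}$; $\mathcal{A}$-homomorphisms/embeddings/isomorphisms are $\mathcal{L}_{\mathcal{A}}$-homomorphisms/embeddings/isomorphisms, and ''finitely generated'' means finitely generated as an $\mathcal{L}_{\mathcal{A}}$-algebra. $\mathrm{Th}_{\forall,\mathcal{A}}$ and $\mathrm{Th}_{\exists,\mathcal{A}}$ denote the sets of universal, resp. existential, $\mathcal{L}_{\mathcal{A}}$-sentences true in the algebra. Equations with coefficients in $\mathcal{A}$ are atomic $\mathcal{L}_{\mathcal{A}}$-formulas $t=s$; for $X=\{x_1,\dots,x_n\}$ and a set $S$ of them, $\mathrm{V}_{\mathcal{B}}(S)\subseteq B^n$ is the set of common solutions (an algebraic set). $\mathcal{B}$ is $\mathcal{A}$-equationally Noetherian if every such $S$ has a finite subset $S_0$ with $\mathrm{V}_{\mathcal{B}}(S)=\mathrm{V}_{\mathcal{B}}(S_0)$. For an algebraic set $Y\subseteq B^n$, $\mathrm{Rad}(Y)$ is the set of all atomic $\mathcal{L}_{\mathcal{A}}$-formulas in $X$ true at all points of $Y$ (all of them if $Y=\emptyset$); it defines a congruence $\theta$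 on the term algebra $\mathcal{T}_{\mathcal{L}_{\mathcal{A}}}(X)$, and the coordinate algebra is $\Gamma(Y)=\mathcal{T}_{\mathcal{L}_{\mathcal{A}}}(X)/\theta$. Zariski topology on $B^n$: these algebraic sets form a prebasis of closed sets; an algebraic set is irreducible if it is not a union of two proper closed subsets. $\mathcal{C}$ is $\mathcal{A}$-discriminated by $\mathcal{B}$ if for every finite $W\subseteq C$ there is an $\mathcal{A}$-homomorphism $\mathcal{C}\to\mathcal{B}$ injective on $W$. Complete atomic type in a theory $T$ (of $\mathcal{L}_{\mathcal{A}}$) in finite variables $X$: a maximal set $p$ of atomic $\mathcal{L}_{\mathcal{A}}$-formulas and their negations in $X$ such that $p\cup T$ is realized in a model of $T$; its atomic part $p^+$ defines the congruence $\theta_p$ ($t\sim s\iff (t=s)\in p^+$) on $\mathcal{T}_{\mathcal{L}_{\mathcal{A}}}(X)$, and $\mathcal{T}_{\mathcal{L}_{\mathcal{A}}}(X)/\theta_p$ is the algebra defined by $p$. Limit algebras (for a functional language $\mathcal{L}^*$, here $\mathcal{L}^*=\mathcal{L}_{\mathcal{A}}$): a diagram-formula in a finite reduct $\mathcal{L}'$ in finite variables $X$ is a conjunction of atomic formulas and negations such that $\neg(x=y)$ is a conjunct for all distinct $x,y\in X$, for each operation $F\in\mathcal{L}'$ and $(x_0,\dots,x_{n_F})\in X^{n_F+1}$ exactly one of $F(x_1,\dots,x_{n_F})=x_0$ and its negation is a conjunct, and for each constant $c\in\mathcal{L}'$ and $x\in X$ exactly one of $x=c$, $\neg(x=c)$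 is a conjunct. A direct system of formulas $\Lambda=(I,\varphi_i,\gamma_{ij})$: a directed poset $I$, consistent diagram-formulas $\varphi_i$ in finite reducts $\mathcal{L}_i$ and finite variable sets $X_i$, maps $\gamma_{ij}:X_i\to X_j$ ($i\le j$) with $\gamma_{ii}=\mathrm{id}$, $\gamma_{jk}\gamma_{ij}=\gamma_{ik}$, conjuncts of $\varphi_i(\gamma_{ij}(X_i))$ being conjuncts of $\varphi_j$; every constant $c$ occurs in a conjunct $x=c$ of some $\varphi_i$; for every $F$, $i$, $(x_1,\dots,x_{n_F})\in X_i^{n_F}$ some $j\ge i$ has a conjunct $F(\gamma_{ij}(x_1),\dots)=x_j$. The limit algebra $L(\Lambda)$ has universe $\{(x,i):x\in X_i\}/\!\equiv$, $(x,i)\equiv(y,j)$ iff $\gamma_{ik}(x)=\gamma_{jk}(y)$ for some $k\ge i,j$, with constants and operations read off from the conjuncts $x=c$ and $F(\dots)=x_j$ (well defined). It is a limit algebra over $\mathcal{B}$ if each $\varphi_i$ is realizable in $\mathcal{B}$. *)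

(* Defs.v *)
From mathcomp Require Import all_boot.
From Stdlib Require Import ClassicalEpsilon List.

Set Implicit Arguments.
Unset Strict Implicit.
Unset Printing Implicit Defensive.

Record Lang := MkLang {
  ops : Type;
  ar : ops -> nat;
  csts : Type }.

Record Alg (L : Lang) := MkAlg {
  carrier :> Type;
  op : forall f : ops L, ('I_(ar f) -> carrier) -> carrier;
  cst : csts L -> carrier }.
Arguments op {L} M f args : rename.
Arguments cst {L} M c : rename.

Inductive term (L : Lang) (V : Type) : Type :=
  | Var : V -> term L V
  | Cnst : csts L -> term L V
  | App : forall f : ops L, ('I_(ar f) -> term L V) -> term L V.
Arguments Var {L V} x.
Arguments Cnst {L V} c.
Arguments App {L V} f args.

Fixpoint eval (L : Lang) (M : Alg L) (V : Type) (v : V -> M) (t : term L V) : M :=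
  match t with
  | Var x => v x
  | Cnst c => cst M c
  | App f args => op M f (fun k => eval v (args k))
  end.

Definition termAlg (L : Lang) (V : Type) : Alg L :=
  @MkAlg L (term L V) (@App L V) (@Cnst L V).

Definition hom (L : Lang) (M N : Alg L) (h : M -> N) : Prop :=
  (forall f args, h (op M f args) = op N f (fun k => h (args k))) /\
  (forall c, h (cst M c) = cst N c).

Definition embedding (L : Lang) (M N : Alg L) (h : M -> N) : Prop :=
  hom h /\ (forall x y, h x = h y -> x = y).

Definition isomorphism (L : Lang) (M N : Alg L) (h : M -> N) : Prop :=
  hom h /\ (forall x y, h x = h y -> x = y) /\ (forall y, exists x, h x = y).

Definition isomorphic (L : Lang) (M N : Alg L) : Prop :=
  exists h : M -> N, isomorphism h.

Definition LA (L : Lang) (A : Alg L) : Lang :=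
  @MkLang (ops L) (@ar L) (csts L + carrier A)%type.

Definition reduct (L : Lang) (A : Alg L) (B : Alg (LA A)) : Alg L :=
  @MkAlg L (carrier B) (fun f args => op B f args) (fun c => cst B (inl c)).

Definition AAlg (L : Lang) (A : Alg L) (B : Alg (LA A)) : Prop :=
  @embedding L A (reduct B) (fun a => cst B (inr a)).

Definition fin_gen (L : Lang) (C : Alg L) : Prop :=
  exists (n : nat) (g : 'I_n -> C), forall c : C, exists t : term L 'I_n, eval g t = c.

Definition qcarrier (M : Type) (th : M -> M -> Prop) : Type :=
  {P : M -> Prop | exists m, forall m', P m' <-> th m m'}.

Definition qclass (M : Type) (th : M -> M -> Prop) (m : M) : qcarrier th :=
  exist _ (th m) (ex_intro _ m (fun m' => iff_refl (th m m'))).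

Definition qrepr (M : Type) (th : M -> M -> Prop) (P : qcarrier th) : M :=
  proj1_sig (constructive_indefinite_description _ (proj2_sig P)).

(** Quotient algebra M / th (meaningful when th is a congruence). *)
Definition quot_alg (L : Lang) (M : Alg L) (th : M -> M -> Prop) : Alg L :=
  @MkAlg L (qcarrier th)
    (fun f args => qclass th (op M f (fun k => qrepr (args k))))
    (fun c => qclass th (cst M c)).

Definition pow_alg (L : Lang) (M : Alg L) (I : Type) : Alg L :=
  @MkAlg L (I -> M) (fun f args i => op M f (fun k => args k i)) (fun c _ => cst M c).

Definition ultrafilter (I : Type) (U : (I -> Prop) -> Prop) : Prop :=
  U (fun _ => True) /\ ~ U (fun _ => False) /\
  (forall S T : I -> Prop, U S -> (forall i, S i -> T i) -> U T) /\
  (forall S T : I -> Prop, U S -> U T -> U (fun i => S i /\ T i)) /\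
  (forall S : I -> Prop, U S \/ U (fun i => ~ S i)).

Definition ultrapower (L : Lang) (M : Alg L) (I : Type) (U : (I -> Prop) -> Prop) : Alg L :=
  @quot_alg L (pow_alg M I) (fun f g => U (fun i => f i = g i)).

Inductive qf (L : Lang) (V : Type) : Type :=
  | QEq : term L V -> term L V -> qf L V
  | QNot : qf L V -> qf L V
  | QAnd : qf L V -> qf L V -> qf L V
  | QOr : qf L V -> qf L V -> qf L V.
Arguments QEq {L V} t s.
Arguments QNot {L V} p.
Arguments QAnd {L V} p q.
Arguments QOr {L V} p q.

Fixpoint holds (L : Lang) (M : Alg L) (V : Type) (v : V -> M) (p : qf L V) : Prop :=
  match p with
  | QEq t s => eval v t = eval v s
  | QNot p => ~ holds v p
  | QAnd p q => holds v p /\ holds v q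
  | QOr p q => holds v p \/ holds v q
  end.

Definition univ_true (L : Lang) (M : Alg L) (n : nat) (phi : qf L 'I_n) : Prop :=
  forall v : 'I_n -> M, holds v phi.

Definition ex_true (L : Lang) (M : Alg L) (n : nat) (phi : qf L 'I_n) : Prop :=
  exists v : 'I_n -> M, holds v phi.

Definition ThU_sub (L : Lang) (M N : Alg L) : Prop :=
  forall (n : nat) (phi : qf L 'I_n), univ_true M phi -> univ_true N phi.

Definition ThE_sub (L : Lang) (M N : Alg L) : Prop :=
  forall (n : nat) (phi : qf L 'I_n), ex_true M phi -> ex_true N phi.

Definition equation (L : Lang) (n : nat) : Type := (term L 'I_n * term L 'I_n)%type.

Definition Vset (L : Lang) (B : Alg L) (n : nat) (S : equation L n -> Prop)
  (p : 'I_n -> B) : Prop :=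
  forall e, S e -> eval p e.1 = eval p e.2.

Definition Vlist (L : Lang) (B : Alg L) (n : nat) (S : list (equation L n))
  (p : 'I_n -> B) : Prop :=
  forall e, In e S -> eval p e.1 = eval p e.2.

(** B is equationally Noetherian (for L_A-equations, i.e. coefficients in A
    when L is instantiated by L_A). *)
Definition eq_noetherian (L : Lang) (B : Alg L) : Prop :=
  forall (n : nat) (S : equation L n -> Prop),
    exists S0 : list (equation L n),
      (forall e, In e S0 -> S e) /\ (forall p : 'I_n -> B, Vset S p <-> Vlist S0 p).

Definition zclosed (L : Lang) (B : Alg L) (n : nat) (Y : ('I_n -> B) -> Prop) : Prop :=
  exists (J : Type) (F : J -> list (equation L n -> Prop)),
    forall p, Y p <-> (forall j, exists S, In S (F j) /\ Vset S p).

Definition irreducible (L : Lang) (B : Alg L) (n : nat) (Y : ('I_n -> B) -> Prop) : Prop :=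
  (exists p, Y p) /\
  forall Y1 Y2 : ('I_n -> B) -> Prop, zclosed Y1 -> zclosed Y2 ->
    (forall p, Y p <-> Y1 p \/ Y2 p) ->
    (forall p, Y p -> Y1 p) \/ (forall p, Y p -> Y2 p).

Definition Rad (L : Lang) (B : Alg L) (n : nat) (Y : ('I_n -> B) -> Prop)
  (t s : term L 'I_n) : Prop :=
  forall p, Y p -> eval p t = eval p s.

Definition coord_alg (L : Lang) (B : Alg L) (n : nat) (Y : ('I_n -> B) -> Prop) : Alg L :=
  @quot_alg L (termAlg L 'I_n) (Rad Y).

Inductive lit (L : Lang) (V : Type) : Type :=
  | LPos : term L V -> term L V -> lit L V
  | LNeg : term L V -> term L V -> lit L V.
Arguments LPos {L V} t s.
Arguments LNeg {L V} t s.

Definition lit_holds (L : Lang) (M : Alg L) (V : Type) (v : V -> M) (l : lit L V) : Prop :=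
  match l with
  | LPos t s => eval v t = eval v s
  | LNeg t s => eval v t <> eval v s
  end.

Definition realizedU (L : Lang) (B : Alg L) (n : nat) (p : lit L 'I_n -> Prop) : Prop :=
  exists M : Alg L, ThU_sub B M /\
    exists v : 'I_n -> M, forall l, p l -> lit_holds v l.

Definition complete_atomic_type (L : Lang) (B : Alg L) (n : nat) (p : lit L 'I_n -> Prop)
  : Prop :=
  realizedU B p /\
  forall p' : lit L 'I_n -> Prop, (forall l, p l -> p' l) -> realizedU B p' ->
    forall l, p' l -> p l.

Definition type_alg (L : Lang) (n : nat) (p : lit L 'I_n -> Prop) : Alg L :=
  @quot_alg L (termAlg L 'I_n) (fun t s => p (LPos t s)).

(** A diagram formula phi_i is represented by its (flat) data: the variables
    X_i = 'I_(nv i), the finite reduct (lists Lops i, Lcs i), the relation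
    Rop i f xs x0  <->  "f(xs) = x0 is a conjunct" (for f in Lops i; otherwise
    its negation is a conjunct), and Rcs i c x <-> "x = c is a conjunct"
    (for c in Lcs i; otherwise its negation), plus all  x <> y  for distinct
    variables. *)
Record DirSys (L : Lang) := MkDirSys {
  ix : Type;
  ixle : ix -> ix -> Prop;
  nv : ix -> nat;
  Lops : ix -> list (ops L);
  Lcs : ix -> list (csts L);
  Rop : forall (i : ix) (f : ops L), ('I_(ar f) -> 'I_(nv i)) -> 'I_(nv i) -> Prop;
  Rcs : forall (i : ix), csts L -> 'I_(nv i) -> Prop;
  gam : forall i j : ix, 'I_(nv i) -> 'I_(nv j) }.
Arguments ixle {L D} i j : rename.
Arguments nv {L D} i : rename.
Arguments Lops {L D} i : rename.
Arguments Lcs {L D} i : rename.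
Arguments Rop {L D i} f xs x0 : rename.
Arguments Rcs {L D} i c x : rename.
Arguments gam {L D} i j x : rename.

Definition diag_sat (L : Lang) (D : DirSys L) (M : Alg L) (i : ix D)
  (v : 'I_(nv i) -> M) : Prop :=
  (forall x y, x <> y -> v x <> v y) /\
  (forall f, In f (Lops i) -> forall xs x0,
      Rop f xs x0 <-> op M f (fun k => v (xs k)) = v x0) /\
  (forall c, In c (Lcs i) -> forall x, Rcs i c x <-> v x = cst M c).

Arguments diag_sat {L D} M {i} v.

Definition dir_system (L : Lang) (D : DirSys L) : Prop :=
  (forall i : ix D, ixle i i) /\
  (forall i j : ix D, ixle i j -> ixle j i -> i = j) /\
  (forall i j k : ix D, ixle i j -> ixle j k -> ixle i k) /\
  (exists i : ix D, True) /\
  (forall i j : ix D, exists k, ixle i k /\ ixle j k) /\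
  (forall i : ix D, exists (M : Alg L) (v : 'I_(nv i) -> M), diag_sat M v) /\
  (forall (i : ix D) x, gam i i x = x) /\
  (forall (i j k : ix D) x, ixle i j -> ixle j k -> gam j k (gam i j x) = gam i k x) /\
  (* conjuncts of phi_i(gamma_ij X_i) are conjuncts of phi_j *)
  (forall i j : ix D, ixle i j ->
     (forall x y, x <> y -> gam i j x <> gam i j y) /\
     (forall f, In f (Lops i) -> In f (Lops j) /\
        forall xs x0, Rop f xs x0 <-> Rop f (fun k => gam i j (xs k)) (gam i j x0)) /\
     (forall c, In c (Lcs i) -> In c (Lcs j) /\
        forall x, Rcs i c x <-> Rcs j c (gam i j x))) /\
  (forall c, exists (i : ix D) x, In c (Lcs i) /\ Rcs i c x) /\
  (forall f (i : ix D) (xs : 'I_(ar f) -> 'I_(nv i)),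
     exists j x, ixle i j /\ In f (Lops j) /\ Rop f (fun k => gam i j (xs k)) x).

(** C is isomorphic to the limit algebra L(D): there is a map iota from
    {(x,i) : x in X_i} onto C whose fibres are exactly the classes of the
    equivalence == and which carries the operations/constants read off from
    the conjuncts to those of C (i.e. the induced bijection L(D) -> C is an
    isomorphism). *)
Definition iso_limit (L : Lang) (D : DirSys L) (C : Alg L) : Prop :=
  exists iota : forall i : ix D, 'I_(nv i) -> C,
    (forall (i j : ix D) x y, iota i x = iota j y <->
       exists k, ixle i k /\ ixle j k /\ gam i k x = gam j k y) /\
    (forall c : C, exists (i : ix D) x, iota i x = c) /\
    (forall (i : ix D) f xs x0, In f (Lops i) -> Rop f xs x0 ->
       op C f (fun k => iota i (xs k)) = iota i x0) /\
    (forall (i : ix D) c x, In c (Lcs i) -> Rcs i c x -> iota i x = cst C c).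

Definition limit_over (L : Lang) (D : DirSys L) (B : Alg L) : Prop :=
  forall i : ix D, exists v : 'I_(nv i) -> B, diag_sat B v.

Definition discriminated (L : Lang) (C B : Alg L) : Prop :=
  forall W : list C, exists h : C -> B, hom h /\
    (forall x y, In x W -> In y W -> h x = h y -> x = y).

(* Main.v *)
Require Import Defs.
From mathcomp Require Import all_boot.
From Stdlib Require Import ClassicalEpsilon List Classical FunctionalExtensionality PropExtensionality ProofIrrelevance.
From mathcomp Require classical_sets filter boolp.

From mathcomp Require Import all_boot.
From Stdlib Require Import ClassicalEpsilon List Classical FunctionalExtensionality PropExtensionality ProofIrrelevance.

Set Implicit Arguments.
Unset Strict Implicit.
Unset Printing Implicit Defensive.

Lemma sig_eq (T : Type) (P : T -> Prop) (a b : sig P) : proj1_sig a = proj1_sig b -> a = b.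
Proof. case: a => x px; case: b => y py /= E; subst y; f_equal; apply: proof_irrelevance. Qed.

Section Quot.
Variables (X : Type) (th : X -> X -> Prop).
Hypothesis threfl : forall x, th x x.
Hypothesis thsym : forall x y, th x y -> th y x.
Hypothesis thtrans : forall x y z, th x y -> th y z -> th x z.

Lemma qrepr_spec (P : qcarrier th) : forall m', proj1_sig P m' <-> th (qrepr P) m'.
Proof. rewrite /qrepr; case: (constructive_indefinite_description _ _) => m Hm /=; exact Hm. Qed.

Lemma qclass_repr (P : qcarrier th) : P = qclass th (qrepr P).
Proof.
have H := qrepr_spec P.
apply: sig_eq => /=.
apply: functional_extensionality => m'; apply: propositional_extensionality; exact: H.
Qed.

Lemma qclass_eq x y : qclass th x = qclass th y <-> th x y.
Proof.
split.
- move=> E; have: proj1_sig (qclass th x) = proj1_sig (qclass th y) by rewrite E.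
  move=> /= E'; rewrite E'; exact: threfl.
- move=> Hxy; rewrite /qclass.
  have E : th x = th y.
    apply: functional_extensionality => m; apply: propositional_extensionality; split.
    + move=> H; apply: thtrans H; exact: thsym.
    + move=> H; exact: thtrans H.
  by apply: sig_eq.
Qed.

Lemma th_repr x : th x (qrepr (qclass th x)).
Proof.
have := qrepr_spec (qclass th x) x => /= [[H _]].
apply: thsym; apply: H; exact: threfl.
Qed.
End Quot.

Section Iso.
Variables (L : Lang) (M : Alg L) (n : nat) (g : 'I_n -> M).
Variable th : term L 'I_n -> term L 'I_n -> Prop.
Hypothesis thK : forall t s, th t s <-> eval g t = eval g s.
Hypothesis gen : forall c : M, exists t, eval g t = c.

Lemma thK_equiv : (forall x, th x x) /\ (forall x y, th x y -> th y x) /\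
  (forall x y z, th x y -> th y z -> th x z).
Proof.
split; first by move=> x; apply/thK.
split; first by move=> x y /thK H; apply/thK.
by move=> x y z /thK H1 /thK H2; apply/thK; rewrite H1.
Qed.

Lemma eval_repr t : eval g (qrepr (qclass th t)) = eval g t.
Proof.
have [r [s t']] := thK_equiv.
symmetry; apply/thK; exact: th_repr.
Qed.

Lemma iso_of_kernel : isomorphic M (@quot_alg L (termAlg L 'I_n) th).
Proof.
have [r [s tr]] := thK_equiv.
pose tc (c : M) := proj1_sig (constructive_indefinite_description _ (gen c)).
have tcP : forall c, eval g (tc c) = c.
  by move=> c; rewrite /tc; case: (constructive_indefinite_description _ _).
exists (fun c => qclass th (tc c)); split; [split|split].
- move=> f args /=; apply/(qclass_eq r s tr); apply/thK.
  rewrite tcP /=; f_equal; apply: functional_extensionality => k.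
  by rewrite eval_repr tcP.
- move=> c /=; apply/(qclass_eq r s tr); apply/thK; by rewrite tcP.
- move=> x y /(qclass_eq r s tr) /thK; by rewrite !tcP.
- move=> P; exists (eval g (qrepr P)); rewrite [RHS](qclass_repr P).
  apply/(qclass_eq r s tr); apply/thK; by rewrite tcP.
Qed.
End Iso.

Section Emb.
Variables (L : Lang) (M : Alg L) (n : nat) (g : 'I_n -> M).
Variable th : term L 'I_n -> term L 'I_n -> Prop.
Hypothesis thK : forall t s, th t s <-> eval g t = eval g s.

Lemma emb_of_kernel :
  embedding (fun P : @quot_alg L (termAlg L 'I_n) th => eval g (qrepr P)).
Proof.
have [r [s tr]] := thK_equiv thK.
split; first split.
- move=> f args /=; rewrite (eval_repr thK) /=.
  f_equal.
- move=> c /=; by rewrite (eval_repr thK).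
- move=> P Q H; rewrite (qclass_repr P) (qclass_repr Q).
  apply/(qclass_eq r s tr); exact/thK.
Qed.
End Emb.

Lemma hom_comp (L : Lang) (M N K : Alg L) (h1 : M -> N) (h2 : N -> K) :
  hom h1 -> hom h2 -> hom (fun x => h2 (h1 x)).
Proof.
move=> [H1o H1c] [H2o H2c]; split.
- by move=> f args; rewrite H1o H2o.
- by move=> c; rewrite H1c H2c.
Qed.

From mathcomp Require Import all_boot.
From Stdlib Require Import ClassicalEpsilon List Classical FunctionalExtensionality PropExtensionality ProofIrrelevance.

Set Implicit Arguments.
Unset Strict Implicit.
Unset Printing Implicit Defensive.

Fixpoint terms_of (L : Lang) (V : Type) (p : qf L V) : list (term L V) :=
  match p with
  | QEq t s => t :: s :: nil
  | QNot p => terms_of p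
  | QAnd p q => terms_of p ++ terms_of q
  | QOr p q => terms_of p ++ terms_of q
  end.

Lemma holds_transfer (L : Lang) (M N : Alg L) (V : Type) (v : V -> M) (w : V -> N) (p : qf L V) :
  (forall t s, In t (terms_of p) -> In s (terms_of p) -> (eval v t = eval v s <-> eval w t = eval w s)) ->
  (holds v p <-> holds w p).
Proof.
elim: p => [t s|p IH|p IHp q IHq|p IHp q IHq] /= H.
- apply: H; simpl; tauto.
- rewrite IH //.
- rewrite IHp ?IHq //; move=> t s Ht Hs; apply: H; apply: in_or_app; tauto.
- rewrite IHp ?IHq //; move=> t s Ht Hs; apply: H; apply: in_or_app; tauto.
Qed.

Lemma eval_hom (L : Lang) (M N : Alg L) (h : M -> N) (V : Type) (v : V -> M) t :
  hom h -> eval (fun x => h (v x)) t = h (eval v t).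
Proof.
move=> [Hop Hc]; elim: t => [x|c|f args IH] //=.
- rewrite Hop; f_equal; apply: functional_extensionality => k; exact: IH.
Qed.

Lemma holds_emb (L : Lang) (M N : Alg L) (h : M -> N) (V : Type) (v : V -> M) p :
  embedding h -> (holds v p <-> holds (fun x => h (v x)) p).
Proof.
move=> [Hh Hinj]; apply: holds_transfer => t s _ _; rewrite !eval_hom //.
split; [by move=> -> | exact: Hinj].
Qed.

Lemma ThE_emb (L : Lang) (M N : Alg L) (h : M -> N) : embedding h -> ThE_sub M N.
Proof. move=> Hh n phi [v Hv]; exists (fun x => h (v x)); exact: (proj1 (holds_emb v phi Hh) Hv). Qed.

Lemma ThE_trans (L : Lang) (M N K : Alg L) : ThE_sub M N -> ThE_sub N K -> ThE_sub M K.
Proof. move=> H1 H2 n phi H; auto. Qed.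

Lemma ThU_ThE (L : Lang) (M N : Alg L) : ThU_sub M N <-> ThE_sub N M.
Proof.
split.
- move=> H n phi [v Hv]; apply: NNPP => Hn.
  have : univ_true M (QNot phi) by move=> w /= Hw; apply: Hn; by exists w.
  by move/H/(_ v).
- move=> H n phi Hu v; apply: NNPP => Hn.
  have : ex_true N (QNot phi) by exists v.
  by move/H => [w /= Hw]; apply: Hw; apply: Hu.
Qed.

Fixpoint bigAnd (L : Lang) (V : Type) (p : qf L V) (l : list (qf L V)) : qf L V :=
  match l with nil => p | q :: l' => QAnd p (bigAnd q l') end.

Lemma holds_bigAnd (L : Lang) (M : Alg L) (V : Type) (v : V -> M) p l :
  holds v (bigAnd p l) <-> (forall q, In q (p :: l) -> holds v q).
Proof.
elim: l p => [|q l IH] p /=.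
- split; [by move=> H q [<-|[]] | by move=> H; apply: H; left].
- rewrite IH; split.
  + move=> [Hp Hl] r [<-|Hr] //; apply: Hl; exact: Hr.
  + move=> H; split; first by apply: H; left.
    by move=> r Hr; apply: H; right.
Qed.

Lemma exists_sat (L : Lang) (M N : Alg L) : ThE_sub M N ->
  forall n (w : 'I_n -> M) (l : list (qf L 'I_n)), (forall p, In p l -> holds w p) ->
  exists v : 'I_n -> N, forall p, In p l -> holds v p.
Proof.
move=> H n w [|p l] Hl.
- case: n w Hl => [|n] w Hl.
  + by exists (fun x : 'I_0 => False_rect _ (Bool.diff_false_true (ltn_ord x))) => p [].
  + have : ex_true M (QEq (@Var L _ (@ord0 n)) (Var ord0)) by exists w.
    move/H => [v _]; by exists v.
- have : ex_true M (bigAnd p l) by exists w; apply/holds_bigAnd.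
  move/H => [v Hv]; exists v; exact/holds_bigAnd.
Qed.

Lemma disc_ThE (L : Lang) (C B : Alg L) : discriminated C B -> ThE_sub C B.
Proof.
move=> Hd n phi [w Hw].
have [h [Hh Hinj]] := Hd (map (eval w) (terms_of phi)).
exists (fun x => h (w x)).
have HT := @holds_transfer L C B 'I_n w (fun x => h (w x)) phi.
apply: (proj1 (HT _)) Hw => t s Ht Hs; rewrite !eval_hom //.
split; first by move=> ->.
apply: Hinj; exact: in_map.
Qed.

From mathcomp Require Import all_boot.
From Stdlib Require Import ClassicalEpsilon List Classical FunctionalExtensionality PropExtensionality ProofIrrelevance.

Set Implicit Arguments.
Unset Strict Implicit.
Unset Printing Implicit Defensive.

Definition dP (P : Prop) : bool := if excluded_middle_informative P then true else false.
Lemma dPE (P : Prop) : dP P = true <-> P.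
Proof. rewrite /dP; case: excluded_middle_informative => H; split => //. Qed.

Section Noeth.
Variables (L : Lang) (B C : Alg L).
Hypothesis HN : eq_noetherian B.
Variables (n : nat) (g : 'I_n -> C).
Hypothesis gen : forall c : C, exists t, eval g t = c.
Hypothesis HE : ThE_sub C B.

Definition Sg (e : equation L n) : Prop := eval g e.1 = eval g e.2.

Lemma key_point (E : list (equation L n)) :
  exists p : 'I_n -> B, Vset Sg p /\ forall e, In e E -> eval g e.1 <> eval g e.2 -> eval p e.1 <> eval p e.2.
Proof.
have [S0 [HS0 HV]] := HN Sg.
pose E' := filter (fun e : equation L n => negb (dP (eval g e.1 = eval g e.2))) E.
pose l := map (fun e : equation L n => QEq e.1 e.2) S0 ++ map (fun e : equation L n => QNot (QEq e.1 e.2)) E'.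
have [p Hp] : exists p : 'I_n -> B, forall q, In q l -> holds p q.
  apply: (exists_sat HE (w := g)) => q Hq; case: (in_app_or _ _ _ Hq) => /in_map_iff [e [<- He]] /=.
  - exact: HS0.
  - move: He; rewrite /E' filter_In => -[_]; case: dP (dPE (eval g e.1 = eval g e.2)) => //= H _ E1.
    by have := proj2 H E1.
exists p; split.
- apply/HV => e He; apply: (Hp (QEq e.1 e.2)); apply: in_or_app; left; apply/in_map_iff; by exists e.
- move=> e He Hne; apply: (Hp (QNot (QEq e.1 e.2))); apply: in_or_app; right; apply/in_map_iff; exists e; split => //.
  rewrite /E' filter_In; split => //.
  by case: dP (dPE (eval g e.1 = eval g e.2)) => //= -[H _]; case: Hne; apply: H.
Qed.

Lemma Rad_Sg t s : Rad (Vset (B := B) Sg) t s <-> eval g t = eval g s.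
Proof.
split.
- move=> H; apply: NNPP => Hne.
  have [p [Hp Hp2]] := key_point ((t, s) :: nil).
  by apply: (Hp2 (t, s)) => //; [left | apply: H].
- by move=> H p Hp; apply: (Hp (t, s)).
Qed.

Lemma noeth_disc : discriminated C B.
Proof.
move=> W.
pose tc (c : C) := proj1_sig (constructive_indefinite_description _ (gen c)).
have tcP : forall c, eval g (tc c) = c.
  by move=> c; rewrite /tc; case: (constructive_indefinite_description _ _).
have [p [Hp Hp2]] := key_point (map (fun pr : C * C => (tc pr.1, tc pr.2)) (list_prod W W)).
exists (fun c => eval p (tc c)); split; first split.
- move=> f args.
  have -> : eval p (tc (op C f args)) = eval p (App f (fun k => tc (args k))).
    apply: (Hp (_, _)); rewrite /Sg /= tcP; f_equal; apply: functional_extensionality => k; by rewrite tcP.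
  by [].
- move=> c.
  have -> : eval p (tc (cst C c)) = eval p (Cnst c) by apply: (Hp (_, _)); rewrite /Sg /= tcP.
  by [].
- move=> x y Hx Hy Hxy; apply: NNPP => Hne.
  apply: (Hp2 (tc x, tc y)) => //=; last by rewrite !tcP.
  apply/in_map_iff; exists (x, y); split => //; exact: in_prod.
Qed.

Lemma noeth_iso : isomorphic C (coord_alg (Vset (B := B) Sg)).
Proof. apply: (iso_of_kernel (g := g)) => //; exact: Rad_Sg. Qed.

Lemma noeth_irr : irreducible (Vset (B := B) Sg).
Proof.
split.
  by have [p [Hp _]] := key_point nil; exists p.
move=> Y1 Y2 [J1 [F1 HF1]] [J2 [F2 HF2]] HY.
apply: NNPP => Hn.
have [p1 [Hp1 Hn1]] : exists p, Vset Sg p /\ ~ Y1 p.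
  apply: NNPP => H; apply: Hn; left => p Hp; apply: NNPP => H1; apply: H; by exists p.
have [p2 [Hp2 Hn2]] : exists p, Vset Sg p /\ ~ Y2 p.
  apply: NNPP => H; apply: Hn; right => p Hp; apply: NNPP => H1; apply: H; by exists p.
have viol : forall (J : Type) (F : J -> list (equation L n -> Prop)) (Y : ('I_n -> B) -> Prop) p,
    (forall p, Y p <-> (forall j, exists S, In S (F j) /\ Vset S p)) -> Vset Sg p -> ~ Y p ->
    exists j (E : list (equation L n)), (forall e, In e E -> eval g e.1 <> eval g e.2) /\
      forall S, In S (F j) -> exists e, In e E /\ S e.
  move=> J F Y p HF Hp HnY.
  have [j Hj] : exists j, forall S, In S (F j) -> ~ Vset S p.
    apply: NNPP => H; apply: HnY; apply/HF => j; apply: NNPP => H2; apply: H; exists j => S HS HV.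
    by apply: H2; exists S.
  exists j.
  elim: (F j) Hj => [|S l IH] Hl.
    by exists nil.
  have [E [HE1 HE2]] := IH (fun S' HS' => Hl S' (or_intror HS')).
  have [e [HSe He]] : exists e, S e /\ eval p e.1 <> eval p e.2.
    apply: NNPP => H; apply: (Hl S (or_introl erefl)) => e HSe; apply: NNPP => H2; apply: H; by exists e.
  exists (e :: E); split.
  - move=> e' [<-|He'] //; last exact: HE1.
    move=> Hg; apply: He; exact: (proj2 (Rad_Sg e.1 e.2) Hg p Hp).
  - move=> S' [<-|HS']; first by exists e; split => //; left.
    by have [e' [? ?]] := HE2 S' HS'; exists e'; split => //; right.
have [j1 [E1 [HE1 HF1']]] := viol _ _ _ _ HF1 Hp1 Hn1.
have [j2 [E2 [HE2 HF2']]] := viol _ _ _ _ HF2 Hp2 Hn2.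
have [p [Hp Hpv]] := key_point (E1 ++ E2).
have Hv : forall e, In e (E1 ++ E2) -> eval p e.1 <> eval p e.2.
  move=> e He; apply: Hpv => //; case: (in_app_or _ _ _ He); [exact: HE1 | exact: HE2].
case/HY: Hp => [/HF1 /(_ j1) | /HF2 /(_ j2)] [S [HS HSp]].
- have [e [He HSe]] := HF1' S HS; apply: (Hv e); first by apply: in_or_app; left.
  exact: HSp.
- have [e [He HSe]] := HF2' S HS; apply: (Hv e); first by apply: in_or_app; right.
  exact: HSp.
Qed.
End Noeth.

From mathcomp Require Import all_boot.
From Stdlib Require Import ClassicalEpsilon List Classical FunctionalExtensionality PropExtensionality ProofIrrelevance.

Set Implicit Arguments.
Unset Strict Implicit.
Unset Printing Implicit Defensive.

Lemma Vset_add (L : Lang) (B : Alg L) n (Sx : equation L n -> Prop) e (p : 'I_n -> B) :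
  Vset (fun x => Sx x \/ x = e) p <-> Vset Sx p /\ eval p e.1 = eval p e.2.
Proof.
split.
- move=> H; split; [by move=> x Hx; apply: H; left | by apply: H; right].
- by move=> [H1 H2] x [Hx| ->]; [apply: H1|].
Qed.

Lemma irr_point (L : Lang) (B : Alg L) n (Sx : equation L n -> Prop) :
  irreducible (Vset (B := B) Sx) -> forall E : list (equation L n),
  (forall e, In e E -> ~ Rad (Vset (B := B) Sx) e.1 e.2) ->
  exists p : 'I_n -> B, Vset Sx p /\ forall e, In e E -> eval p e.1 <> eval p e.2.
Proof.
move=> [[p0 Hp0] Hirr]; elim => [|e E IH] HE.
  by exists p0.
have [q [Hq Hq2]] := IH (fun e' He' => HE e' (or_intror He')).
apply: NNPP => H.
pose Y1 := Vset (B := B) (fun x => Sx x \/ x = e).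
pose Y2 := fun p : 'I_n -> B => exists e', In e' E /\ Vset (fun x => Sx x \/ x = e') p.
have Z1 : zclosed Y1.
  exists unit, (fun _ => (fun x => Sx x \/ x = e) :: nil) => p; split.
  - by move=> Hp j; exists (fun x => Sx x \/ x = e); split => //; left.
  - by move=> /(_ tt) [S [[<-|[]] HS]].
have Z2 : zclosed Y2.
  exists unit, (fun _ => map (fun e' x => Sx x \/ x = e') E) => p; split.
  - move=> [e' [He' Hp]] j; exists (fun x => Sx x \/ x = e'); split => //.
    apply/in_map_iff; by exists e'.
  - move=> /(_ tt) [S [/in_map_iff [e' [<- He']] HS]]; by exists e'.
have HY : forall p, Vset Sx p <-> Y1 p \/ Y2 p.
  move=> p; split.
  - move=> Hp; apply: NNPP => Hn; apply: H; exists p; split => //.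
    move=> e' [<-|He'] He1.
    + by apply: Hn; left; apply/Vset_add.
    + by apply: Hn; right; exists e'; split => //; apply/Vset_add.
  - move=> [/Vset_add [] // | [e' [_ /Vset_add []]] //].
case: (Hirr Y1 Y2 Z1 Z2 HY) => Hsub.
- apply: (HE e (or_introl erefl)) => p Hp.
  by have /Vset_add [] := Hsub p Hp.
- have [e' [He' /Vset_add [_ He'2]]] := Hsub q Hq.
  exact: (Hq2 e' He' He'2).
Qed.

Lemma point_hom (L : Lang) (B : Alg L) n (Y : ('I_n -> B) -> Prop) p :
  Y p -> hom (fun P : coord_alg Y => eval p (qrepr P)).
Proof.
move=> Hp.
have r : forall x, Rad Y x x by [].
have s : forall x y, Rad Y x y -> Rad Y y x by move=> x y H q Hq; rewrite H.
have tr : forall x y z, Rad Y x y -> Rad Y y z -> Rad Y x z by move=> x y z H1 H2 q Hq; rewrite H1 ?H2.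
have E : forall t, eval p (qrepr (qclass (Rad Y) t)) = eval p t.
  by move=> t; symmetry; exact: (th_repr r s t p Hp).
split.
- by move=> f args /=; rewrite E.
- by move=> c /=; rewrite E.
Qed.

Lemma irr_disc (L : Lang) (B C : Alg L) n (Sx : equation L n -> Prop) :
  irreducible (Vset (B := B) Sx) -> isomorphic C (coord_alg (Vset (B := B) Sx)) ->
  discriminated C B.
Proof.
move=> Hirr [h [Hh [Hinj _]]] W.
set Y := Vset (B := B) Sx.
have r : forall x, Rad Y x x by [].
have s : forall x y, Rad Y x y -> Rad Y y x by move=> x y H q Hq; rewrite H.
have tr : forall x y z, Rad Y x y -> Rad Y y z -> Rad Y x z by move=> x y z H1 H2 q Hq; rewrite H1 ?H2.
pose E := filter (fun e : equation L n => negb (dP (Rad Y e.1 e.2)))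
  (map (fun pr : C * C => (qrepr (h pr.1), qrepr (h pr.2))) (list_prod W W)).
have HE : forall e, In e E -> ~ Rad Y e.1 e.2.
  move=> e; rewrite /E filter_In => -[_].
  by case: dP (dPE (Rad Y e.1 e.2)) => //= -[_ H] _ HR; have := H HR.
have [p [Hp Hp2]] := irr_point Hirr HE.
exists (fun c => eval p (qrepr (h c))); split.
  exact: (hom_comp Hh (point_hom Hp)).
move=> x y Hx Hy Hxy; apply: NNPP => Hne.
have HR : ~ Rad Y (qrepr (h x)) (qrepr (h y)).
  move=> HR; apply: Hne; apply: Hinj.
  by rewrite (qclass_repr (h x)) (qclass_repr (h y)); apply/(qclass_eq r s tr).
apply: (Hp2 (qrepr (h x), qrepr (h y))) => //.
rewrite /E filter_In; split.
+ apply/in_map_iff; exists (x, y); split => //; exact: in_prod.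
+ by case: dP (dPE (Rad Y (qrepr (h x)) (qrepr (h y)))) => // -[H _]; case: HR; apply: H.
Qed.

Section Types.
Variables (L : Lang) (B C : Alg L).

Lemma type_of_gen n (g : 'I_n -> C) : ThU_sub B C ->
  complete_atomic_type B (fun l => lit_holds g l).
Proof.
move=> HU; split.
  by exists C; split => //; exists g.
move=> p' Hsub [M [_ [v Hv]]] l Hl.
apply: NNPP => Hn.
case: l Hl Hn => t s Hl /= Hn.
- have := Hv (LNeg t s) (Hsub (LNeg t s) Hn); have := Hv _ Hl; by [].
- have Hts : eval g t = eval g s by apply: NNPP.
  have := Hv (LPos t s) (Hsub (LPos t s) Hts); have := Hv _ Hl; by [].
Qed.

Lemma type_iso n (g : 'I_n -> C) : (forall c : C, exists t, eval g t = c) ->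
  isomorphic C (type_alg (fun l => lit_holds g l)).
Proof. move=> gen; apply: (iso_of_kernel (g := g)) => //. Qed.

Lemma type_ThE n (p : lit L 'I_n -> Prop) : complete_atomic_type B p ->
  isomorphic C (type_alg p) -> ThE_sub C B.
Proof.
move=> [[M [HU [v Hv]]] Hmax] [h [Hh [Hinj _]]].
have Hp : forall l, lit_holds v l -> p l.
  move=> l Hl; apply: (Hmax (fun l => p l \/ lit_holds v l)).
  - by move=> l' H; left.
  - exists M; split => //; exists v => l' [H|H] //; exact: Hv.
  - by right.
have thK : forall t s, p (LPos t s) <-> eval v t = eval v s.
  move=> t s; split; [exact: (Hv (LPos t s)) | exact: (Hp (LPos t s))].
have Hemb := emb_of_kernel thK.
apply: (ThE_trans (ThE_emb (conj Hh Hinj))).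
apply: (ThE_trans (ThE_emb Hemb)).
exact/ThU_ThE.
Qed.
End Types.

From mathcomp Require Import all_boot.
From Stdlib Require Import ClassicalEpsilon List Classical FunctionalExtensionality PropExtensionality ProofIrrelevance.
From mathcomp Require classical_sets filter boolp.

Set Implicit Arguments.
Unset Strict Implicit.
Unset Printing Implicit Defensive.

Module UF.
Import classical_sets filter boolp.
Local Open Scope classical_set_scope.

Lemma ultra_exists (I : Type) (F : (I -> Prop) -> Prop) :
  F (fun _ => True) ->
  (forall S T : I -> Prop, F S -> (forall i, S i -> T i) -> F T) ->
  (forall S T : I -> Prop, F S -> F T -> F (fun i => S i /\ T i)) ->
  (forall S, F S -> exists i, S i) ->
  exists U, ultrafilter U /\ forall S, F S -> U S.
Proof.
move=> FT FS FI Fne.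
have PF : ProperFilter F.
  apply: Build_ProperFilter_ex.
    move=> P FP; have [i Pi] := Fne _ FP; by exists i.
  split.
  - by have -> : setT = (fun _ : I => True) by [].
  - by move=> P Q FP FQ; apply: FI.
  - by move=> P Q PQ FP; apply: (FS P).
have [G [UG sFG]] := ultraFilterLemma PF.
exists G; split; last by move=> S FS'; apply: sFG.
have GF : ProperFilter G := ultra_proper.
split; first exact: (@filterT _ G).
split.
  move=> G0; apply: (@filter_not_empty _ G _).
  by have -> : set0 = (fun _ : I => False) by [].
split; first by move=> S T GS ST; apply: (filterS _ GS) => i; apply: ST.
split; first by move=> S T GS GT; apply: (filterI GS GT).
move=> S; case: (in_ultra_setVsetC S UG) => H; [by left | by right].
Qed.
End UF.

Section Los.
Variables (L : Lang) (B : Alg L) (I : Type) (U : (I -> Prop) -> Prop).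
Hypothesis HU : ultrafilter U.

Let UT : U (fun _ => True). Proof. by case: HU. Qed.
Let UF : ~ U (fun _ => False). Proof. by case: HU => _ []. Qed.
Let US : forall S T : I -> Prop, U S -> (forall i, S i -> T i) -> U T. Proof. by case: HU => _ [_ []]. Qed.
Let UI : forall S T : I -> Prop, U S -> U T -> U (fun i => S i /\ T i). Proof. by case: HU => _ [_ [_ []]]. Qed.
Let UC : forall S : I -> Prop, U S \/ U (fun i => ~ S i). Proof. by case: HU => _ [_ [_ []]]. Qed.

Lemma U_all (S : I -> Prop) : (forall i, S i) -> U S.
Proof. move=> H; apply: (US UT) => i _; exact: H. Qed.

Lemma U_fin m (P : 'I_m -> I -> Prop) : (forall k, U (P k)) -> U (fun i => forall k, P k i).
Proof.
move=> H.
suff : forall m', m' <= m -> U (fun i => forall k : 'I_m, k < m' -> P k i).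
  move/(_ m (leqnn m)) => H2; apply: (US H2) => i Hi k; apply: Hi; exact: ltn_ord.
elim => [|m' IH] Hm.
  by apply: U_all => i k.
have Hm' : m' < m by [].
apply: (US (UI (IH (ltnW Hm)) (H (Ordinal Hm')))) => i [H1 H2] k Hk.
rewrite ltnS leq_eqVlt in Hk; case/orP: Hk => Hk.
- by have -> : k = Ordinal Hm' by apply: val_inj; exact/eqP.
- exact: H1.
Qed.

Definition thU (f g : I -> B) : Prop := U (fun i => f i = g i).

Lemma thU_refl f : thU f f. Proof. exact: U_all. Qed.
Lemma thU_sym f g : thU f g -> thU g f. Proof. move=> H; apply: (US H) => i ->. done. Qed.
Lemma thU_trans f g h : thU f g -> thU g h -> thU f h.
Proof. move=> H1 H2; apply: (US (UI H1 H2)) => i [-> ->]. done. Qed.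

Definition UP := ultrapower B U.

Lemma eval_UP (V : Type) (v : V -> UP) t :
  eval v t = qclass thU (fun i => eval (fun x => qrepr (v x) i) t).
Proof.
elim: t => [x|c|f args IH] /=.
- rewrite {1}(qclass_repr (v x)); done.
- done.
- apply/(qclass_eq thU_refl thU_sym thU_trans).
  have H := U_fin (P := fun k i => qrepr (eval v (args k)) i = eval (fun x => qrepr (v x) i) (args k)) _.
  apply: (US (H _)) => [k|i Hi]; last first.
    f_equal; apply: functional_extensionality => k; exact: Hi.
  rewrite IH; apply: thU_sym; exact: (th_repr thU_refl thU_sym).
Qed.

Lemma los (V : Type) (v : V -> UP) p :
  holds v p <-> U (fun i => holds (fun x => qrepr (v x) i) p).
Proof.
elim: p => [t s|p IH|p IHp q IHq|p IHp q IHq] /=.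
- rewrite !eval_UP; split.
  + by move/(qclass_eq thU_refl thU_sym thU_trans).
  + by move=> H; apply/(qclass_eq thU_refl thU_sym thU_trans).
- rewrite IH; split.
  + by move=> Hn; case: (UC (fun i => holds (fun x => qrepr (v x) i) p)).
  + move=> H1 H2; apply: UF; apply: (US (UI H1 H2)) => i [] //.
- rewrite IHp IHq; split.
  + by move=> [H1 H2]; apply: UI.
  + by move=> H; split; apply: (US H) => i [].
- rewrite IHp IHq; split.
  + move=> [H|H]; apply: (US H) => i; tauto.
  + move=> H; case: (UC (fun i => holds (fun x => qrepr (v x) i) p)) => H1; first by left.
    case: (UC (fun i => holds (fun x => qrepr (v x) i) q)) => H2; first by right.
    exfalso; apply: UF; apply: (US (UI H (UI H1 H2))) => i; tauto.
Qed.

Lemma ThU_UP : ThU_sub B UP.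
Proof. move=> n phi Hu v; apply/los; apply: U_all => i; exact: Hu. Qed.
End Los.

Lemma P3_ThE (L : Lang) (B C : Alg L) (I : Type) (U : (I -> Prop) -> Prop) :
  ultrafilter U -> (exists h : C -> ultrapower B U, embedding h) -> ThE_sub C B.
Proof.
move=> HU [h Hh]; apply: (ThE_trans (ThE_emb Hh)); apply/ThU_ThE; exact: ThU_UP.
Qed.

Lemma disc_UP (L : Lang) (B C : Alg L) : discriminated C B ->
  exists (I : Type) (U : (I -> Prop) -> Prop), ultrafilter U /\
    exists h : C -> ultrapower B U, embedding h.
Proof.
move=> Hd.
pose F := fun S : list C -> Prop => exists W, forall W', incl W W' -> S W'.
have [U [HU HFU]] : exists U, ultrafilter U /\ forall S, F S -> U S.
  apply: UF.ultra_exists.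
  - by exists nil.
  - move=> S T [W HW] ST; exists W => W' H; apply: ST; exact: HW.
  - move=> S T [W1 H1] [W2 H2]; exists (W1 ++ W2) => W' H; split.
    + apply: H1 => a Ha; apply: H; apply: in_or_app; by left.
    + apply: H2 => a Ha; apply: H; apply: in_or_app; by right.
  - move=> S [W HW]; exists W; apply: HW => a; done.
pose hW := fun W => proj1_sig (constructive_indefinite_description _ (Hd W)).
have hWP : forall W, hom (hW W) /\ (forall x y, In x W -> In y W -> hW W x = hW W y -> x = y).
  by move=> W; rewrite /hW; case: (constructive_indefinite_description _ _).
have US : forall S T : list C -> Prop, U S -> (forall i, S i -> T i) -> U T by case: HU => _ [_ []].
have UI : forall S T : list C -> Prop, U S -> U T -> U (fun i => S i /\ T i) by case: HU => _ [_ [_ []]].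
have UF : ~ U (fun _ => False) by case: HU => _ [].
exists (list C), U; split => //.
exists (fun x => qclass (thU U) (fun W => hW W x)); split; first split.
- move=> f args /=; apply/(qclass_eq (thU_refl HU) (thU_sym HU) (thU_trans HU)).
  have H := U_fin HU (P := fun k i => hW i (args k) = qrepr (qclass (thU U) (fun W => hW W (args k))) i) _.
  apply: (US _ _ (H _)) => [k|i Hi]; last first.
    have [[Ho _] _] := hWP i; rewrite Ho; f_equal; apply: functional_extensionality => k; exact: Hi.
  exact: (th_repr (thU_refl HU) (thU_sym HU)).
- move=> c /=; apply/(qclass_eq (thU_refl HU) (thU_sym HU) (thU_trans HU)).
  apply: U_all => // i; have [[_ Hc] _] := hWP i; exact: Hc.
- move=> x y /(qclass_eq (thU_refl HU) (thU_sym HU) (thU_trans HU)) Hxy.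
  apply: NNPP => Hne; apply: UF.
  have Hin : U (fun W => incl (x :: y :: nil) W).
    apply: HFU; exists (x :: y :: nil) => W' H; exact: H.
  apply: (US _ _ (UI _ _ Hxy Hin)) => W [Heq Hinc]; apply: Hne.
  have [_ Hi] := hWP W; apply: Hi Heq; apply: Hinc; simpl; tauto.
Qed.

From mathcomp Require Import all_boot.
From Stdlib Require Import ClassicalEpsilon List Classical FunctionalExtensionality PropExtensionality ProofIrrelevance.

Set Implicit Arguments.
Unset Strict Implicit.
Unset Printing Implicit Defensive.

Lemma in_In (T : eqType) (s : list T) y : y \in s -> In y s.
Proof. elim: s => [|a s IH] //; rewrite seq.in_cons => /orP [/eqP ->|H]; [by left | by right; apply: IH]. Qed.

Section LimThE.
Variables (L : Lang) (D : DirSys L) (B C : Alg L).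
Hypothesis Hd : dir_system D.
Hypothesis Hlim : limit_over D B.
Local Unset Implicit Arguments.
Variable iota : forall i : ix D, 'I_(nv i) -> C.
Local Set Implicit Arguments.
Hypothesis Hiota : forall (i j : ix D) x y, iota i x = iota j y <->
       exists k, ixle i k /\ ixle j k /\ gam i k x = gam j k y.
Hypothesis Hsurj : forall c : C, exists (i : ix D) x, iota i x = c.
Hypothesis Hop : forall (i : ix D) f xs x0, In f (Lops i) -> Rop f xs x0 ->
       op C f (fun k => iota i (xs k)) = iota i x0.
Hypothesis Hcs : forall (i : ix D) c x, In c (Lcs i) -> Rcs i c x -> iota i x = cst C c.

Variables (n : nat) (w : 'I_n -> C).

Local Unset Implicit Arguments.
Fixpoint rep (i : ix D) (t : term L 'I_n) (x : 'I_(nv i)) : Prop :=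
  match t with
  | Var y => iota i x = w y
  | Cnst c => In c (Lcs i) /\ Rcs i c x
  | App f args => exists xs : 'I_(ar f) -> 'I_(nv i),
      (forall k, rep i (args k) (xs k)) /\ In f (Lops i) /\ Rop f xs x
  end.
Local Set Implicit Arguments.

Lemma rep_iota i t x : rep i t x -> iota i x = eval w t.
Proof.
elim: t x => [y|c|f args IH] x /=.
- done.
- by move=> [H1 H2]; apply: Hcs.
- move=> [xs [Hxs [Hf HR]]]; rewrite -(Hop Hf HR); f_equal.
  apply: functional_extensionality => k; exact: IH.
Qed.

Lemma iota_gam (i j : ix D) x : ixle i j -> iota j (gam i j x) = iota i x.
Proof.
case: Hd => Hrefl [_ [_ [_ [_ [_ [Hid _]]]]]] Hij.
symmetry; apply/Hiota; exists j; split => //; split => //; by rewrite Hid.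
Qed.

Lemma iota_inj (i : ix D) x y : iota i x = iota i y -> x = y.
Proof.
case: Hd => _ [_ [_ [_ [_ [_ [_ [_ [Hmono _]]]]]]]].
move/Hiota => [k [Hik [_ Heq]]]; apply: NNPP => Hne.
have [Hinj _] := Hmono i k Hik; exact: (Hinj x y Hne Heq).
Qed.

Lemma rep_up i j t x : rep i t x -> ixle i j -> rep j t (gam i j x).
Proof.
case: Hd => _ [_ [_ [_ [_ [_ [_ [_ [Hmono _]]]]]]]].
elim: t x => [y|c|f args IH] x /= Hr Hij.
- by rewrite iota_gam.
- have [_ [_ Hc]] := Hmono i j Hij; have [Hin HR] := Hc c (proj1 Hr).
  split => //; exact/HR/(proj2 Hr).
- move: Hr => [xs [Hxs [Hf HR]]].
  exists (fun k => gam i j (xs k)); split; first by move=> k; apply: IH.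
  have [_ [Ho _]] := Hmono i j Hij; have [Hin HR'] := Ho f Hf.
  split => //; exact/HR'.
Qed.

Lemma ub_fin m (ik : 'I_m -> ix D) : exists j, forall k, ixle (ik k) j.
Proof.
case: Hd => Hrefl [_ [Htrans [[i0 _] [Hdir _]]]].
suff : forall m', m' <= m -> exists j, forall k : 'I_m, k < m' -> ixle (ik k) j.
  move/(_ m (leqnn m)) => [j Hj]; exists j => k; apply: Hj; exact: ltn_ord.
elim => [|m' IH] Hm.
  by exists i0.
have Hm' : m' < m by [].
have [j Hj] := IH (ltnW Hm).
have [j' [H1 H2]] := Hdir j (ik (Ordinal Hm')).
exists j' => k Hk; rewrite ltnS leq_eqVlt in Hk; case/orP: Hk => Hk.
- by have -> : k = Ordinal Hm' by apply: val_inj; exact/eqP.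
- apply: Htrans (Hj k Hk) H1.
Qed.

Lemma rep_exists t : exists i x, rep i t x.
Proof.
case: Hd => Hrefl [_ [Htrans [_ [_ [_ [_ [_ [_ [Hcst Hopd]]]]]]]]].
elim: t => [y|c|f args IH].
- have [i [x Hx]] := Hsurj (w y); by exists i, x.
- have [i [x [Hin HR]]] := Hcst c; by exists i, x.
- pose ik k := proj1_sig (constructive_indefinite_description _ (IH k)).
  have ikP : forall k, exists x, rep (ik k) (args k) x.
    by move=> k; rewrite /ik; case: (constructive_indefinite_description _ _).
  pose xk k := proj1_sig (constructive_indefinite_description _ (ikP k)).
  have xkP : forall k, rep (ik k) (args k) (xk k).
    by move=> k; rewrite /xk; case: (constructive_indefinite_description _ _).
  have [j Hj] := ub_fin ik.
  have [j' [x [Hjj' [Hf HR]]]] := Hopd f j (fun k => gam (ik k) j (xk k)).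
  exists j', x, (fun k => gam j j' (gam (ik k) j (xk k))); split => //.
  move=> k; apply: rep_up => //; apply: rep_up => //; exact: Hj.
Qed.

Lemma rep_list (T : list (term L 'I_n)) : exists i, forall t, In t T -> exists x, rep i t x.
Proof.
case: Hd => Hrefl [_ [Htrans [[i0 _] [Hdir _]]]].
elim: T => [|t T [i Hi]].
  by exists i0.
have [j [x Hx]] := rep_exists t.
have [k [H1 H2]] := Hdir i j.
exists k => s [<-|Hs].
- exists (gam j k x); exact: rep_up.
- have [y Hy] := Hi s Hs; exists (gam i k y); exact: rep_up.
Qed.

Lemma rep_uniq i t x y : rep i t x -> rep i t y -> x = y.
Proof. move=> H1 H2; apply: iota_inj; by rewrite (rep_iota H1) (rep_iota H2). Qed.

Lemma lim_ThE_aux phi : holds w phi -> exists v : 'I_n -> B, holds v phi.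
Proof.
move=> Hw.
have [i Hi] := rep_list (terms_of phi ++ map Var (enum 'I_n)).
have [u [Hu1 [Hu2 Hu3]]] := Hlim i.
have HV : forall y : 'I_n, exists x, rep i (Var y) x.
  move=> y; apply: Hi; apply: in_or_app; right; apply/in_map_iff; exists y; split => //.
  apply: in_In; by rewrite mem_enum.
pose xy y := proj1_sig (constructive_indefinite_description _ (HV y)).
have xyP : forall y, rep i (Var y) (xy y).
  by move=> y; rewrite /xy; case: (constructive_indefinite_description _ _).
exists (fun y => u (xy y)).
have Hev : forall t x, rep i t x -> eval (fun y => u (xy y)) t = u x.
  elim => [y|c|f args IH] x.
  - by move=> H; rewrite /= (rep_uniq (t := Var y) H (xyP y)).
  - by move=> /= [Hin HR]; symmetry; apply/(Hu3 c Hin).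
  - move=> /= [xs [Hxs [Hf HR]]].
    have -> : (fun k => eval (fun y => u (xy y)) (args k)) = (fun k => u (xs k)).
      apply: functional_extensionality => k; exact: IH.
    exact/(Hu2 f Hf).
have HT := @holds_transfer L C B 'I_n w (fun y => u (xy y)) phi.
apply: (proj1 (HT _)) Hw => t s Ht Hs.
have [x Hx] := Hi t (in_or_app _ _ _ (or_introl Ht)).
have [y Hy] := Hi s (in_or_app _ _ _ (or_introl Hs)).
rewrite (Hev _ _ Hx) (Hev _ _ Hy) -(rep_iota Hx) -(rep_iota Hy); split.
- by move/iota_inj => ->.
- move=> Hxy; congr (iota i _); apply: NNPP => Hne; exact: (Hu1 x y Hne Hxy).
Qed.
End LimThE.

Lemma lim_ThE (L : Lang) (D : DirSys L) (B C : Alg L) :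
  dir_system D -> limit_over D B -> iso_limit D C -> ThE_sub C B.
Proof.
move=> Hd Hlim [iota [H1 [H2 [H3 H4]]]] n phi [w Hw].
exact: (lim_ThE_aux Hd Hlim H1 H2 H3 H4 Hw).
Qed.

From mathcomp Require Import all_boot.
From Stdlib Require Import ClassicalEpsilon List Classical FunctionalExtensionality PropExtensionality ProofIrrelevance.

Set Implicit Arguments.
Unset Strict Implicit.
Unset Printing Implicit Defensive.

Section Lists.
Variable T : Type.

Definition NoDupN (l : list T) : Prop :=
  forall i j d, i < size l -> j < size l -> seq.nth d l i = seq.nth d l j -> i = j.

Lemma nth_In (l : list T) d i : i < size l -> In (seq.nth d l i) l.
Proof.
elim: l i => [|a l IH] [|i] //= H; [by left | right; exact: IH].
Qed.

Lemma In_nth (l : list T) x : In x l -> exists i, i < size l /\ seq.nth x l i = x.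
Proof.
elim: l => [|a l IH] //= [->|H]; first by exists 0.
have [i [Hi Hn]] := IH H; by exists i.+1.
Qed.

Lemma nth_default_irr (l : list T) d d' i : i < size l -> seq.nth d l i = seq.nth d' l i.
Proof. elim: l i => [|a l IH] [|i] //= H; exact: IH. Qed.

Lemma exists_nodup (l : list T) : exists l', (forall x, In x l <-> In x l') /\ NoDupN l'.
Proof.
elim: l => [|a l [l' [H1 H2]]].
  by exists nil; split => // i j d.
case: (classic (In a l')) => Ha.
- exists l'; split => // x /=; split.
  + by move=> [<-|Hx] //; apply/H1.
  + by move=> Hx; right; apply/H1.
- exists (a :: l'); split.
  + move=> x /=; rewrite H1; tauto.
  + move=> [|i] [|j] d //= Hi Hj.
    * move=> E; exfalso; apply: Ha; rewrite E; exact: nth_In.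
    * move=> E; exfalso; apply: Ha; rewrite -E; exact: nth_In.
    * by move=> E; congr S; exact: (H2 i j d).
Qed.

Definition fin (X : T -> Prop) := exists l, forall x, X x <-> In x l.

Definition enumL (X : T -> Prop) : list T :=
  epsilon (inhabits nil) (fun l => forall x, X x <-> In x l).

Lemma enumL_spec X : fin X -> forall x, X x <-> In x (enumL X).
Proof. move=> H; rewrite /enumL; exact: (epsilon_spec (inhabits nil) (fun l => forall x, X x <-> In x l) H). Qed.

Definition enumN (X : T -> Prop) : list T :=
  epsilon (inhabits nil) (fun l => (forall x, X x <-> In x l) /\ NoDupN l).

Lemma enumN_spec X : fin X -> (forall x, X x <-> In x (enumN X)) /\ NoDupN (enumN X).
Proof.
move=> [l Hl]; rewrite /enumN.
have Hex : exists l', (forall x, X x <-> In x l') /\ NoDupN l'.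
  have [l' [H1 H2]] := exists_nodup l; exists l'; split => // x; rewrite Hl; exact: H1.
exact: (epsilon_spec (inhabits nil) (fun l => (forall x, X x <-> In x l) /\ NoDupN l) Hex).
Qed.
End Lists.

Section Constr.
Variables (L : Lang) (B C : Alg L).
Hypothesis Hdisc : discriminated C B.

Record Idx := MkIdx {
  iX : C -> Prop; iO : ops L -> Prop; iK : csts L -> Prop;
  iXf : fin iX; iOf : fin iO; iKf : fin iK;
  iXne : (exists x, iX x) \/ (C -> False) }.

Lemma idx_eq (i j : Idx) : iX i = iX j -> iO i = iO j -> iK i = iK j -> i = j.
Proof.
case: i => X O K Xf Of Kf Xn; case: j => X' O' K' Xf' Of' Kf' Xn' /= E1 E2 E3.
subst; f_equal; apply: proof_irrelevance.
Qed.

Definition ile (i j : Idx) : Prop :=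
  (forall x, iX i x -> iX j x) /\ (forall f, iO i f -> iO j f) /\ (forall c, iK i c -> iK j c).

Definition inv (i : Idx) : nat := size (enumN (iX i)).
Definition elem (i : Idx) (x : 'I_(inv i)) : C := tnth (in_tuple (enumN (iX i))) x.

Lemma elem_nth i (x : 'I_(inv i)) d : elem x = seq.nth d (enumN (iX i)) x.
Proof. by rewrite /elem (tnth_nth d). Qed.

Lemma elem_in i (x : 'I_(inv i)) : iX i (elem x).
Proof.
have [H1 _] := enumN_spec (iXf i); apply/H1; rewrite (elem_nth x (elem x)); apply: nth_In; exact: ltn_ord.
Qed.

Lemma elem_inj i (x y : 'I_(inv i)) : elem x = elem y -> x = y.
Proof.
have [_ H2] := enumN_spec (iXf i).
rewrite (elem_nth x (elem x)) (elem_nth y (elem x)) => E.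
apply: val_inj; apply: (H2 _ _ (elem x)) => //; exact: ltn_ord.
Qed.

Lemma elem_surj i c : iX i c -> exists x : 'I_(inv i), elem x = c.
Proof.
have [H1 _] := enumN_spec (iXf i).
move=> Hc; have [k [Hk E]] := In_nth (proj1 (H1 c) Hc); exists (Ordinal Hk); by rewrite (elem_nth _ c).
Qed.

Lemma gam_ex (i j : Idx) (x : 'I_(inv i)) :
  exists y : 'I_(inv j), elem y = elem x \/ ~ (exists y' : 'I_(inv j), elem y' = elem x).
Proof.
case: (classic (exists y' : 'I_(inv j), elem y' = elem x)) => H.
  by have [y Hy] := H; exists y; left.
case: (iXne j) => [[c Hc]|HC]; last by case: (HC (elem x)).
have [y _] := elem_surj Hc; by exists y; right.
Qed.

Definition igam (i j : Idx) (x : 'I_(inv i)) : 'I_(inv j) :=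
  proj1_sig (constructive_indefinite_description _ (@gam_ex i j x)).
Arguments igam : clear implicits.

Lemma igam_spec (i j : Idx) (x : 'I_(inv i)) : iX j (elem x) -> elem (igam i j x) = elem x.
Proof.
move=> H; rewrite /igam; case: (constructive_indefinite_description _ _) => y /= [] // Hn.
by case: Hn; apply: elem_surj.
Qed.

Definition iLops (i : Idx) := enumL (iO i).
Definition iLcs (i : Idx) := enumL (iK i).
Definition iRop (i : Idx) (f : ops L) (xs : 'I_(ar f) -> 'I_(inv i)) (x0 : 'I_(inv i)) : Prop :=
  op C f (fun k => elem (xs k)) = elem x0.
Definition iRcs (i : Idx) (c : csts L) (x : 'I_(inv i)) : Prop := elem x = cst C c.

Definition DS : DirSys L := MkDirSys ile iLops iLcs iRop iRcs igam.

Lemma iLops_spec i f : In f (iLops i) <-> iO i f.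
Proof. symmetry; exact: (enumL_spec (iOf i)). Qed.
Lemma iLcs_spec i c : In c (iLcs i) <-> iK i c.
Proof. symmetry; exact: (enumL_spec (iKf i)). Qed.

Definition idx_of (lx : list C) (lo : list (ops L)) (lk : list (csts L))
  (H : (exists x, In x lx) \/ (C -> False)) : Idx.
refine (@MkIdx (fun x => In x lx) (fun f => In f lo) (fun c => In c lk) _ _ _ H).
- by exists lx.
- by exists lo.
- by exists lk.
Defined.

Lemma ne_app (i : Idx) (l : list C) : (exists x, In x (enumN (iX i) ++ l)) \/ (C -> False).
Proof.
case: (iXne i) => [[c Hc]|H]; last by right.
left; exists c; apply: in_or_app; left; exact/(proj1 (enumN_spec (iXf i))).
Qed.

Definition join (i j : Idx) : Idx :=
  @idx_of (enumN (iX i) ++ enumN (iX j)) (enumL (iO i) ++ enumL (iO j))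
    (enumL (iK i) ++ enumL (iK j)) (ne_app i _).

Lemma join_le (i j : Idx) : ile i (join i j) /\ ile j (join i j).
Proof.
split; split; [|split| |split] => x H /=; apply: in_or_app;
  [left; exact/(proj1 (enumN_spec (iXf i)))
  |left; exact/(enumL_spec (iOf i))
  |left; exact/(enumL_spec (iKf i))
  |right; exact/(proj1 (enumN_spec (iXf j)))
  |right; exact/(enumL_spec (iOf j))
  |right; exact/(enumL_spec (iKf j))].
Qed.

Lemma DS_dir : dir_system DS.
Proof.
split; first by move=> i; split; [|split] => x.
split.
  move=> i j [H1 [H2 H3]] [H1' [H2' H3']]; apply: idx_eq;
  apply: functional_extensionality => x; apply: propositional_extensionality; split; auto.
split.
  move=> i j k [H1 [H2 H3]] [H1' [H2' H3']]; split; [|split] => x Hx; auto.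
split.
  case: (classic (exists c : C, True)) => [[c _]|HC].
  - exists (@idx_of (c :: nil) nil nil (or_introl (ex_intro _ c (or_introl erefl)))); done.
  - by exists (@idx_of nil nil nil (or_intror (fun c => HC (ex_intro _ c I)))).
split.
  move=> i j; exists (join i j); exact: join_le.
split.
  move=> i; exists C, (@elem i); split; first by move=> x y Hxy E; apply: Hxy; exact: elem_inj.
  by split.
split.
  move=> i x /=; apply: elem_inj; apply: igam_spec; exact: elem_in.
split.
  move=> i j k x /= [Hij _] [Hjk _]; apply: elem_inj.
  have e1 : elem (igam i j x) = elem x := igam_spec (Hij _ (elem_in x)).
  have e2 : elem (igam j k (igam i j x)) = elem (igam i j x) := igam_spec (Hjk _ (elem_in _)).
  have e3 : elem (igam i k x) = elem x := igam_spec (Hjk _ (Hij _ (elem_in x))).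
  by rewrite e2 e1 e3.
have Hg : forall (i j : Idx) x, ile i j -> elem (igam i j x) = elem x.
  move=> i j x [Hij _]; apply: igam_spec; apply: Hij; exact: elem_in.
split.
  move=> i j Hij; split.
    move=> x y Hxy E; apply: Hxy; apply: elem_inj; rewrite -(Hg _ _ x Hij) -(Hg _ _ y Hij); congr elem; exact: E.
  split.
  - move=> f /iLops_spec Hf; split; first by apply/iLops_spec; apply: (proj1 (proj2 Hij)).
    move=> xs x0 /=; rewrite /iRop Hg //.
    have -> : (fun k => elem (igam i j (xs k))) = (fun k => elem (xs k)).
      by apply: functional_extensionality => k; rewrite Hg.
    done.
  - move=> c /iLcs_spec Hc; split; first by apply/iLcs_spec; apply: (proj2 (proj2 Hij)).
    by move=> x /=; rewrite /iRcs Hg.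
split.
  move=> c.
  have Hne : (exists x, In x (cst C c :: nil)) \/ (C -> False) by left; exists (cst C c); left.
  pose i := @idx_of (cst C c :: nil) nil (c :: nil) Hne.
  have [x Hx] := @elem_surj i (cst C c) (or_introl erefl).
  exists i, x; split => //; apply/iLcs_spec; by left.
move=> f i xs.
pose v := op C f (fun k => elem (xs k)).
pose j := @idx_of (enumN (iX i) ++ v :: nil) (f :: enumL (iO i)) (enumL (iK i)) (ne_app i _).
have Hij : ile i j.
  split; [|split] => x H /=.
  - apply: in_or_app; left; exact/(proj1 (enumN_spec (iXf i))).
  - right; exact/(enumL_spec (iOf i)).
  - exact/(enumL_spec (iKf i)).
have [x Hx] : exists x : 'I_(inv j), elem x = v.
  apply: elem_surj => /=; apply: in_or_app; right; by left.
exists j, x; split => //; split; first by apply/iLops_spec; left.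
rewrite /= /iRop Hx /v; f_equal; apply: functional_extensionality => k; exact: Hg.
Qed.

Lemma DS_lim : limit_over DS B.
Proof.
move=> i /=.
pose W := enumN (iX i) ++
  flat_map (fun f => map (fun F : {ffun 'I_(ar f) -> 'I_(inv i)} => op C f (fun k => elem (F k)))
                          (enum {ffun 'I_(ar f) -> 'I_(inv i)})) (iLops i)
  ++ map (cst C) (iLcs i).
have Wel : forall x : 'I_(inv i), In (elem x) W.
  move=> x; apply: in_or_app; left; apply/(proj1 (enumN_spec (iXf i))); exact: elem_in.
have Wop : forall f (xs : 'I_(ar f) -> 'I_(inv i)), In f (iLops i) -> In (op C f (fun k => elem (xs k))) W.
  move=> f xs Hf; apply: in_or_app; right; apply: in_or_app; left.
  apply/in_flat_map; exists f; split => //; apply/in_map_iff; exists (finfun xs); split.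
  - f_equal; apply: functional_extensionality => k; by rewrite ffunE.
  - apply: in_In; by rewrite mem_enum.
have Wcs : forall c, In c (iLcs i) -> In (cst C c) W.
  move=> c Hc; apply: in_or_app; right; apply: in_or_app; right; apply/in_map_iff; by exists c.
have [h [[Ho Hc] Hinj]] := Hdisc W.
exists (fun x => h (elem x)); split.
  move=> x y Hxy E; apply: Hxy; apply: elem_inj; exact: Hinj.
split.
- move=> f Hf xs x0 /=; rewrite /iRop; split.
  + by move=> <-; rewrite Ho.
  + move=> E; rewrite -Ho in E; exact: (Hinj _ _ (Wop _ _ Hf) (Wel x0) E).
- move=> c Hcs x /=; rewrite /iRcs; split.
  + by move=> ->; rewrite Hc.
  + move=> E; rewrite -Hc in E; exact: (Hinj _ _ (Wel x) (Wcs c Hcs) E).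
Qed.

Lemma DS_iso : iso_limit DS C.
Proof.
exists (@elem); split.
  move=> i j x y /=; split.
  - move=> E; exists (join i j); have [Hi Hj] := join_le i j; split => //; split => //.
    apply: elem_inj; rewrite (igam_spec (proj1 Hi _ (elem_in x))) (igam_spec (proj1 Hj _ (elem_in y))); exact: E.
  - move=> [k [Hik [Hjk E]]].
    rewrite -(igam_spec (proj1 Hik _ (elem_in x))) -(igam_spec (proj1 Hjk _ (elem_in y))).
    by rewrite E.
split.
  move=> c.
  have Hne : (exists x, In x (c :: nil)) \/ (C -> False) by left; exists c; left.
  pose i := @idx_of (c :: nil) nil nil Hne.
  have [x Hx] := @elem_surj i c (or_introl erefl); by exists i, x.
split; first by move=> i f xs x0 _.
by move=> i c x _.
Qed.
End Constr.

Lemma disc_lim (L : Lang) (B C : Alg L) : discriminated C B ->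
  exists D : DirSys L, dir_system D /\ limit_over D B /\ iso_limit D C.
Proof. move=> H; exists (DS C); split; [exact: DS_dir | split; [exact: DS_lim | exact: DS_iso]]. Qed.

From mathcomp Require Import all_boot.

Theorem theoremB (L : Lang) (A : Alg L) (B : Alg (LA A)) (C : Alg (LA A)) :
  AAlg B -> eq_noetherian B -> AAlg C -> fin_gen C ->
  let P1 := ThU_sub B C in
  let P2 := ThE_sub C B in
  let P3 := exists (I : Type) (U : (I -> Prop) -> Prop), ultrafilter U /\
              exists h : C -> ultrapower B U, embedding h in
  let P4 := discriminated C B in
  let P5 := exists D : DirSys (LA A), dir_system D /\ limit_over D B /\ iso_limit D C in
  let P6 := exists (n : nat) (p : lit (LA A) 'I_n -> Prop),
              complete_atomic_type B p /\ isomorphic C (type_alg p) in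
  let P7 := exists (n : nat) (S : equation (LA A) n -> Prop),
              irreducible (Vset (B := B) S) /\ isomorphic C (coord_alg (Vset (B := B) S)) in
  (P1 <-> P2) /\ (P1 <-> P3) /\ (P1 <-> P4) /\ (P1 <-> P5) /\ (P1 <-> P6) /\ (P1 <-> P7).
Proof.
move=> _ HN _ [n [g gen]] P1 P2 P3 P4 P5 P6 P7.
have E12 : P1 <-> P2 := ThU_ThE B C.
have H24 : P2 -> P4 := fun HE => noeth_disc HN gen HE.
have H42 : P4 -> P2 := @disc_ThE _ C B.
split; first exact: E12.
split.
  split; first by move=> H; apply: disc_UP; apply: H24; apply/E12.
  by move=> [I [U [HU Hh]]]; apply/E12; exact: (P3_ThE HU Hh).
split.
  split; first by move=> H; apply: H24; apply/E12.
  by move=> H; apply/E12; apply: H42.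
split.
  split; first by move=> H; apply: disc_lim; apply: H24; apply/E12.
  by move=> [D [Hd [Hl Hi]]]; apply/E12; exact: (lim_ThE Hd Hl Hi).
split.
  split.
  - move=> H; exists n, (fun l => lit_holds g l); split; first exact: type_of_gen.
    exact: type_iso.
  - by move=> [m [p [Hp Hiso]]]; apply/E12; exact: (type_ThE Hp Hiso).
split.
- move=> H; have HE : P2 by apply/E12.
  exists n, (Sg g); split; [exact: (noeth_irr HN g HE) | exact: (noeth_iso HN gen HE)].
- move=> [m [S [Hirr Hiso]]]; apply/E12; apply: H42; exact: (irr_disc Hirr Hiso).
Qed.
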